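(* Let $n\ge3$, $\ell>0$, $\alpha\ge(n-2)\ell$, $S=\alpha I_n+\ell\mathbf{1}_n\mathbf{1}_n^\top$, and let $P\ne0$ be a real symmetric diagonally dominant $n\times n$ matrix with nonnegative entries. Let $Q=S^{-1}PS^{-1}$. Then $Q_{ii}-\sum_{j\ne i}Q_{ij}>0$ for every $i=1,\dots,n$.
   Context: For a real matrix $P$, $\Delta_i(P)=|P_{ii}|-\sum_{j\ne i}|P_{ij}|$; $P$ is diagonally dominant if $\Delta_i(P)\ge0$ for all $i$. *)

(* Defs.v *)
From HB Require Import structures.
From mathcomp Require Import all_boot all_order all_algebra.
Set Implicit Arguments. Unset Strict Implicit. Unset Printing Implicit Defensive.
Import Order.TTheory GRing.Theory Num.Theory.
Local Open Scope ring_scope.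

Definition Delta (R : realFieldType) (n : nat) (P : 'M[R]_n) (i : 'I_n) : R :=
  `|P i i| - \sum_(j < n | j != i) `|P i j|.

Definition diag_dominant (R : realFieldType) (n : nat) (P : 'M[R]_n) : Prop :=
  forall i : 'I_n, 0 <= Delta P i.

(* Main.v *)
Require Import Defs.
From HB Require Import structures.
From mathcomp Require Import all_boot all_order all_algebra.
From mathcomp Require Import ring lra zify.
Import Order.TTheory GRing.Theory Num.Theory.
Local Open Scope ring_scope.

Lemma JJ (R : comPzRingType) n : (const_mx 1 : 'M[R]_n) *m (const_mx 1 : 'M[R]_n) = n%:R *: (const_mx 1 : 'M[R]_n).
Proof.
apply/matrixP=> i j; rewrite !mxE.
under eq_bigr do rewrite !mxE mulr1.
by rewrite sumr_const card_ord mulr1.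
Qed.

Lemma expand3 (R : comPzRingType) n (P J : 'M[R]_n) c :
  (1%:M - c *: J) *m P *m (1%:M - c *: J) =
  P - c *: (J *m P) - c *: (P *m J) + (c * c) *: (J *m P *m J).
Proof.
rewrite mulmxBl mul1mx -scalemxAl mulmxBr mulmx1 mulmxBl -!scalemxAr -scalemxAl scalerA.
by rewrite opprB addrA addrAC.
Qed.

Lemma inv_S (R : realFieldType) (n : nat) (l alpha : R) (ha : 0 < alpha) (hl : 0 < l) :
  invmx (alpha%:M + l *: const_mx 1 : 'M[R]_n) = alpha^-1 *: (1%:M - (l / (alpha + n%:R * l)) *: const_mx 1).
Proof.
set S := (alpha%:M + _).
set c := l / (alpha + n%:R * l).
set T := alpha^-1 *: _.
have hm : 0 < alpha + n%:R * l by rewrite ltr_wpDr // mulr_ge0 // ?ler0n ?ltW.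
have hc : l - alpha * c - l * c * n%:R = 0.
  rewrite /c; field; by rewrite gt_eqF.
have ST : S *m T = 1%:M.
  rewrite /S /T -scalemxAr mulmxDl !mulmxBr mulmx1 mul_scalar_mx -!scalemxAr.

  rewrite mulmx1 -scalemxAl JJ !scalerA.
  have -> : alpha%:M - (alpha * c) *: const_mx 1 + (l *: const_mx 1 - (c * l * n%:R) *: const_mx 1)
     = alpha%:M + (l - alpha * c - l * c * n%:R) *: (const_mx 1 : 'M[R]_n).
    rewrite !scalerBl (mulrC c l) -!addrA; congr (_ + _).
    by rewrite addrC -addrA (addrC _ (- _)).
  by rewrite hc scale0r addr0 scale_scalar_mx mulVf ?gt_eqF.
have [uS _] := mulmx1_unit ST.
by rewrite -[T]mul1mx -(mulVmx uS) -mulmxA ST mulmx1.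
Qed.

Lemma le_sum1 (R : realFieldType) n (Pr : pred 'I_n) (F : 'I_n -> R) a :
  Pr a -> (forall k, Pr k -> 0 <= F k) -> F a <= \sum_(k < n | Pr k) F k.
Proof.
move=> Pa hF; rewrite (bigD1 a) //= lerDl; apply: sumr_ge0 => k /andP[hk _]; exact: hF.
Qed.

Theorem proposition5p4 (R : realFieldType) (n : nat) (l alpha : R)
  (P : 'M[R]_n)
  (hn : (3 <= n)%N) (hl : 0 < l) (halpha : (n - 2)%:R * l <= alpha)
  (hPsym : P^T = P) (hPdd : diag_dominant P)
  (hPnn : forall i j, 0 <= P i j) (hP0 : P != 0) :
  let S : 'M[R]_n := alpha%:M + l *: const_mx 1 in
  let Q : 'M[R]_n := invmx S *m P *m invmx S in
  forall i : 'I_n, 0 < Q i i - \sum_(j < n | j != i) Q i j.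
Proof.
move=> S Q i.
have h1n : 1 <= (n - 2)%:R :> R by rewrite ler1n; lia.
have ha : 0 < alpha by nra.
set N := n%:R : R.
have hN : 3 <= N by rewrite /N ler_nat.
set m := alpha + N * l.
have hm : 0 < m by rewrite /m; nra.
set c := l / m.
have hc : 0 < c by rewrite /c divr_gt0.
have hcN : c * N < 1.
  rewrite /c mulrAC ltr_pdivrMr // mul1r /m; lra.
set J := (const_mx 1 : 'M[R]_n).
set r := fun k => \sum_(j < n) P k j.
set s := \sum_(k < n) r k.
have hsym : forall a b, P a b = P b a by move=> a b; rewrite -{1}hPsym mxE.
have hJP : J *m P = \matrix_(a, b) r b.
  apply/matrixP => a b; rewrite !mxE; under eq_bigr do rewrite mxE mul1r hsym; by [].
have hPJ : P *m J = \matrix_(a, b) r a.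
  apply/matrixP => a b; rewrite !mxE; under eq_bigr do rewrite mxE mulr1; by [].
have hJPJ : J *m P *m J = \matrix_(a, b) s.
  apply/matrixP => a b; rewrite hJP !mxE; under eq_bigr do rewrite !mxE mulr1; by [].
set a2 := alpha^-1 * alpha^-1.
have HQm : Q = a2 *: (P - c *: (J *m P) - c *: (P *m J) + (c * c) *: (J *m P *m J)).
  rewrite /Q /S inv_S // -/m -/c -/J -!scalemxAl -scalemxAr scalerA expand3 //.
have HQ : forall j, Q i j = a2 * (P i j - c * r j - c * r i + c * c * s).
  by move=> j; rewrite HQm hJPJ hJP hPJ !mxE.
set x := P i i.
set y := \sum_(j < n | j != i) P i j.
have hr : forall k, r k = P k k + \sum_(j < n | j != k) P k j.
  by move=> k; rewrite /r (bigD1 k).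
have hdd : forall k, \sum_(j < n | j != k) P k j <= P k k.
  move=> k; have := hPdd k; rewrite /Delta ger0_norm //.
  under eq_bigr do rewrite ger0_norm //.
  by rewrite subr_ge0.
have hxy : y <= x by exact: hdd.
have hy0 : 0 <= y by apply: sumr_ge0.
have hx0 : 0 <= x by exact: hPnn.
have hrk : forall k, k != i -> 2 * P i k <= r k.
  move=> k hk; rewrite hr; have h := hdd k.
  have : P k i <= \sum_(j < n | j != k) P k j by apply: le_sum1 => //; rewrite eq_sym.
  rewrite hsym; lra.
have hs : x + 3 * y <= s.
  rewrite /s (bigD1 i) //= hr -/x -/y.
  have : 2 * y <= \sum_(k < n | k != i) r k.
    rewrite /y mulr_sumr; apply: ler_sum => k hk; exact: hrk.
  lra.
have hspos : 0 < s.
  case: (boolP [exists a, exists b, P a b != 0]) => [/existsP[a /existsP[b hab]] | /negP hne].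
    have h1 : P a b <= r a by apply: (@le_sum1 _ _ predT (P a)).
    have h2 : r a <= s by apply: (@le_sum1 _ _ predT r) => // k _; apply: sumr_ge0.
    have h3 : 0 < P a b by rewrite lt0r hab hPnn.
    lra.
  exfalso; move/negP: hP0; apply; apply/eqP/matrixP => a b; rewrite mxE.
  case: (eqVneq (P a b) 0) => // h; exfalso; apply: hne; apply/existsP; exists a; apply/existsP; exists b; exact: h.
have hsdef : s = \sum_(k < n) r k by [].
have hrdef : r i = \sum_(k < n) P i k by [].
clearbody r s.
have Hsum : \sum_(j < n) Q i j = a2 * (r i - c * s - c * N * r i + c * c * N * s).
  under eq_bigr do rewrite HQ.
  rewrite -mulr_sumr; congr (_ * _).
  rewrite big_split sumrB sumrB /=.
  rewrite -[\sum_(i0 < n) c * r i0]mulr_sumr -hsdef -hrdef.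
  rewrite !sumr_const card_ord.
  rewrite /N; ring.
have hsplit : \sum_(j < n | j != i) Q i j = \sum_(j < n) Q i j - Q i i.
  by rewrite [X in _ = X - _](bigD1 i) //=; ring.
have hri : r i = x + y by rewrite hr.
rewrite hsplit Hsum HQ hri.
set D := 2 * (x - 2 * c * (x + y) + c * c * s) - ((x + y) - c * s - c * N * (x + y) + c * c * N * s).
have -> : a2 * (x - c * (x + y) - c * (x + y) + c * c * s) -
  (a2 * (x + y - c * s - c * N * (x + y) + c * c * N * s) -
   a2 * (x - c * (x + y) - c * (x + y) + c * c * s)) = a2 * D by rewrite /D; ring.
have ha2 : 0 < a2 by rewrite /a2 mulr_gt0 // invr_gt0.
apply: mulr_gt0 => //.
have h3c : 3 * c <= c * N by nra.
have h2c : 0 < 1 - 2 * c by lra.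
set E := c * (1 - c * N + 2 * c).
set K := 2 * c * (N - 2) * (1 - 2 * c).
set A0 := 1 + c * N - 4 * c + E.
have hE : 0 < E by rewrite /E mulr_gt0 //; lra.
have hK : 0 < K.
  rewrite /K; apply: mulr_gt0; last lra. apply: mulr_gt0; last lra. apply: mulr_gt0 => //; lra.
have hA0 : 0 < A0 by rewrite /A0; lra.
have -> : D = A0 * (x - y) + K * y + E * (s - x - 3 * y) by rewrite /D /A0 /K /E; ring.
have t1 : 0 <= A0 * (x - y) by apply: mulr_ge0; lra.
have t3 : 0 <= E * (s - x - 3 * y) by apply: mulr_ge0; lra.
have [y0|ypos] := eqVneq y 0.
  have t2 : K * y = 0 by rewrite y0 mulr0.
  have [x0|xpos] := eqVneq x 0.
    have t4 : E * (s - x - 3 * y) = E * s by rewrite x0 y0; ring.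
    have : 0 < E * s by apply: mulr_gt0.
    lra.
  have t4 : A0 * (x - y) = A0 * x by rewrite y0 subr0.
  have : 0 < A0 * x by apply: mulr_gt0 => //; rewrite lt0r xpos hx0.
  lra.
have t2 : 0 < K * y by apply: mulr_gt0 => //; rewrite lt0r ypos hy0.
lra.
Qed.
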